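(* Let $\beta$ be an ordinal and $Q\subseteq I\times\beta$. Then $Q\in\mathcal{B}_V\otimes\mathcal{P}(\beta)$ if and only if every section $Q_\alpha$ ($\alpha<\beta$) lies in some $\boldsymbol{\Sigma}^V_\xi(I)$ and $\mathrm{comp}(Q)<\omega_1$.
   Context: $I=(0,1)$, $V\subseteq I$ a fixed Lebesgue nonmeasurable set, $\mathcal{B}_V=\sigma(\mathcal{B}(I)\cup\{V\})$, and $\mathcal{B}_V\otimes\mathcal{P}(\beta)$ is the product $\sigma$-algebra on $I\times\beta$. Let $C_0=V$, $C_1=I\setminus V$, and let $\{C_n\}_{n\geq2}$ enumerate the open intervals with rational endpoints contained in $I$. Define $\boldsymbol{\Sigma}^V_1(I)$ as the family of unions of subfamilies of $\{C_n\}_{n\in\omega}$; $\boldsymbol{\Pi}^V_\xi(I)$ as the complements (in $I$) of members of $\boldsymbol{\Sigma}^V_\xi(I)$; and for $\xi>1$, $\boldsymbol{\Sigma}^V_\xi(I)=\{\bigcup_{n\in\omega}A^{(n)}: A^{(n)}\in\boldsymbol{\Pi}^V_{\xi_n}(I),\ \xi_n<\xi\}$. For $Q\subseteq I\times\beta$ and $\alpha<\beta$, the section is $Q_\alpha=\{r:(r,\alpha)\in Q\}$; $\mathrm{comp}(Q,\alpha)=\min\{\xi\geq1:Q_\alpha\in\boldsymbol{\Sigma}^V_\xi(I)\}$ and $\mathrm{comp}(Q)=\sup_{\alpha<\beta}\mathrm{comp}(Q,\alpha)$. *)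

(* Defs.v *)
From HB Require Import structures.
From mathcomp Require Import all_boot all_order all_algebra.
From mathcomp Require Import all_classical all_reals all_analysis.

Set Implicit Arguments.
Unset Strict Implicit.
Unset Printing Implicit Defensive.

Import Order.TTheory GRing.Theory Num.Theory.
Local Open Scope classical_set_scope.
Local Open Scope ring_scope.

(* Countable ordinals, represented by Brouwer trees.  Every countable        *)
(* ordinal (i.e. every ordinal < omega_1) is the value |b| of some tree b,   *)
(* where |bzero| = 0, |bsucc b| = |b| + 1, |blim f| = sup_n |f n|, and      *)
(* conversely every |b| is countable.                                        *)
Inductive bord : Type :=
| bzero : bord
| bsucc : bord -> bord
| blim : (nat -> bord) -> bord.

(* ble a b  <->  |a| <= |b| ;  blt a b  <->  |a| < |b| *)
Inductive ble : bord -> bord -> Prop :=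
| ble_zero b : ble bzero b
| ble_succ a b : blt a b -> ble (bsucc a) b
| ble_lim (f : nat -> bord) b : (forall n, ble (f n) b) -> ble (blim f) b
with blt : bord -> bord -> Prop :=
| blt_succ a b : ble a b -> blt a (bsucc b)
| blt_lim a (f : nat -> bord) n : blt a (f n) -> blt a (blim f).

Definition bone : bord := bsucc bzero.

Definition beq (a b : bord) : Prop := ble a b /\ ble b a.

Section Hierarchy.
Variable R : realType.

Definition Iu : set R := `]0, 1[%classic.

(* Lebesgue measurability = Caratheodory measurability w.r.t. Lebesgue outer
   measure (the completed Lebesgue sigma-algebra). *)
Definition lebesgue_measurable (A : set R) : Prop :=
  (@wlength R idfun)^*%mu.-cara.-measurable A.

Definition borel_I : set (set R) :=
  [set B | exists B0 : set (measurableTypeR R), measurable B0 /\ B = Iu `&` B0].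

Definition BV (V : set R) : set (set R) :=
  <<s Iu, borel_I `|` [set V] >>.

Definition BV_prod (V : set R) (T : Type) : set (set (R * T)) :=
  <<s Iu `*` [set: T],
      [set A `*` B | A in BV V & B in [set: set T]] >>.

Definition Cfam (V : set R) : set (set R) :=
  [set V] `|` [set Iu `\` V] `|`
  [set C | exists p q : rat, C = `]ratr p, ratr q[%classic /\ C `<=` Iu].

(* SigmaV V xi A  <->  A \in Sigma^V_xi(I), for a countable ordinal xi >= 1. *)
Inductive SigmaV (V : set R) : bord -> set R -> Prop :=
| SigmaV_one xi (F : set (set R)) :
    beq xi bone -> F `<=` Cfam V ->
    SigmaV V xi (\bigcup_(C in F) C)
| SigmaV_gt xi (xs : nat -> bord) (S : nat -> set R) :
    blt bone xi ->
    (forall n, blt (xs n) xi) ->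
    (forall n, SigmaV V (xs n) (S n)) ->
    (* A^(n) := I \ S n is in Pi^V_(xs n)(I) *)
    SigmaV V xi (\bigcup_n (Iu `\` S n)).

Definition PiV (V : set R) (xi : bord) (A : set R) : Prop :=
  exists S, SigmaV V xi S /\ A = Iu `\` S.

Definition section (T : Type) (Q : set (R * T)) (alpha : T) : set R :=
  [set r | Q (r, alpha)].

(* comp(Q, alpha) <= xi, i.e. Q_alpha \in Sigma^V_eta for some 1 <= eta <= xi *)
Definition comp_le (V : set R) (T : Type) (Q : set (R * T)) (alpha : T)
  (xi : bord) : Prop :=
  exists eta, ble eta xi /\ SigmaV V eta (section Q alpha).

Definition sections_in_hierarchy (V : set R) (T : Type) (Q : set (R * T)) :=
  forall alpha : T, exists xi : bord, SigmaV V xi (section Q alpha).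

(* comp(Q) = sup_alpha comp(Q, alpha) < omega_1, i.e. the comp(Q, alpha) are
   bounded by a single countable ordinal. *)
Definition comp_lt_omega1 (V : set R) (T : Type) (Q : set (R * T)) :=
  exists xi : bord, forall alpha : T, comp_le V Q alpha xi.

End Hierarchy.

(* Main.v *)
Require Import Defs.
From HB Require Import structures.
From mathcomp Require Import all_boot all_order all_algebra.
From mathcomp Require Import all_classical all_reals all_analysis.
Import Order.TTheory GRing.Theory Num.Theory.
Local Open Scope classical_set_scope.


Lemma ble_limr a f n : ble a (f n) -> ble a (blim f).
Proof.
elim: a => [|a IH|g IH] H.
- exact: ble_zero.
- inversion H as [|a0 b0 Hab|]; subst. apply: ble_succ. exact: blt_lim Hab.
- inversion H as [| |g0 b0 Hg]; subst. apply: ble_lim => m. exact: IH.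
Qed.

Arguments ble_limr {a f n}.
Lemma ble_refl a : ble a a.
Proof.
elim: a => [|a IH|f IH]; first exact: ble_zero.
- exact/ble_succ/blt_succ.
- apply: ble_lim => n. exact: (@ble_limr (f n) f n (IH n)).
Qed.

Ltac invle H := inversion H as [|?a ?b ?Hl|?f ?b ?Hl]; subst; clear H.
Ltac invlt H := inversion H as [?a ?b ?Hl|?a ?f ?n ?Hl]; subst; clear H.

Lemma trans_all a : (forall b c, ble a b -> ble b c -> ble a c) /\
  (forall b c, blt a b -> ble b c -> blt a c).
Proof.
have P2 : forall a, (forall b c, ble a b -> ble b c -> ble a c) ->
   (forall b c, blt a b -> ble b c -> blt a c).
  move=> a0 P1.
  elim=> [|b IHb|f IHb] c H1 H2.
  + invlt H1.
  + invlt H1. invle H2.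
    elim: c Hl0 => [|c IHc|g IHc] H4.
    * invlt H4.
    * invlt H4. apply: blt_succ. exact: P1 Hl Hl0.
    * invlt H4. exact: blt_lim (IHc n Hl0).
  + invlt H1. invle H2. exact: IHb (Hl0 n).
elim: a => [|a IH|f IH].
- split; first by move=> *; exact: ble_zero.
  apply: P2 => *; exact: ble_zero.
- have P1 : forall b c, ble (bsucc a) b -> ble b c -> ble (bsucc a) c.
    move=> b c H1 H2; invle H1. apply: ble_succ. exact: IH.2 Hl H2.
  by split=> //; apply: P2.
- have P1 : forall b c, ble (blim f) b -> ble b c -> ble (blim f) c.
    move=> b c H1 H2; invle H1. apply: ble_lim => n. exact: (IH n).1 (Hl n) H2.
  by split=> //; apply: P2.
Qed.

Lemma ble_trans a b c : ble a b -> ble b c -> ble a c.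
Proof. exact: (trans_all a).1. Qed.
Lemma blt_ble_trans a b c : blt a b -> ble b c -> blt a c.
Proof. exact: (trans_all a).2. Qed.

Arguments ble_trans {a b c}.
Arguments blt_ble_trans {a b c}.
Lemma ble_bsucc b : ble b (bsucc b).
Proof.
elim: b => [|b IH|f IH]; first exact: ble_zero.
- exact/ble_succ/blt_succ.
- apply: ble_lim => n. apply: (ble_trans (IH n)).
  apply/ble_succ/blt_succ. exact: (@ble_limr (f n) f n (ble_refl (f n))).
Qed.

Lemma blt_ble a b : blt a b -> ble a b.
Proof.
elim: b a => [|b IH|f IH] a H.
- invlt H.
- invlt H. exact: ble_trans Hl (ble_bsucc b).
- invlt H. exact: ble_limr (IH _ _ Hl).
Qed.

Local Open Scope ring_scope.

Section Sig.
Variable R : realType.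
Variable V : set R.
Local Notation Iu := (@Iu R).
Hypothesis hVI : V `<=` Iu.

Lemma Cfam_sub C : Cfam V C -> C `<=` Iu.
Proof. by move=> [[->|->]|[p [q [_ H]]]] // x []. Qed.

Lemma SigmaV_sub {xi A} : SigmaV V xi A -> A `<=` Iu.
Proof.
elim => [xi' F _ HF|xi' xs S _ _ _ _] r.
- by case=> C /HF /Cfam_sub; apply.
- by case=> n _ [].
Qed.

Lemma SigmaV_bone {xi A} : SigmaV V xi A -> ble bone xi.
Proof. by case => [? ? [_ h] _ | ? ? ? h _ _] //; exact: blt_ble h. Qed.

Lemma SigmaV_compl {eta A} : SigmaV V eta A -> SigmaV V (bsucc eta) (Iu `\` A).
Proof.
move=> h.
have -> : Iu `\` A = \bigcup_(n in [set: nat]) (Iu `\` (fun _ : nat => A) n).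
  by rewrite bigcup_const //; exists 0%N.
apply: (SigmaV_gt (xs := fun _ => eta)) => [|n|n //].
- exact: blt_succ (SigmaV_bone h).
- exact: blt_succ (ble_refl _).
Qed.

Lemma SigmaV_union {eta xi : nat -> bord} {A : nat -> set R} :
  (forall k, SigmaV V (eta k) (A k)) -> (forall k, ble (eta k) (xi k)) ->
  SigmaV V (bsucc (blim (fun k => bsucc (xi k)))) (\bigcup_k A k).
Proof.
move=> hA hle.
have -> : \bigcup_k A k = \bigcup_k (Iu `\` (Iu `\` A k)).
  apply: eq_bigcupr => k _; rewrite setDD setIidr //; exact: SigmaV_sub (hA k).
apply: (SigmaV_gt (xs := fun k => bsucc (eta k))) => [|k|k].
- apply/blt_succ/ble_succ; apply: (blt_lim (n:=0%N)); exact/blt_succ/ble_zero.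
- apply/blt_succ/ble_succ; apply: (blt_lim (n:=k)); exact/blt_succ.
- exact: SigmaV_compl.
Qed.

Lemma SigmaV_set0 : SigmaV V bone set0.
Proof.
have h := @SigmaV_one R V bone set0 (conj (ble_refl _) (ble_refl _)) (sub0set _).
by rewrite bigcup_set0 in h.
Qed.

Lemma SigmaV_V : SigmaV V bone V.
Proof.
have h := @SigmaV_one R V bone [set V] (conj (ble_refl _) (ble_refl _)).
rewrite bigcup_set1 in h; apply: h => C ->; by left; left.
Qed.

Definition hier := [set A | exists eta, SigmaV V eta A].

Lemma hier_sigma : sigma_algebra Iu hier.
Proof.
split.
- exists bone; exact: SigmaV_set0.
- move=> A [eta h]; exists (bsucc eta); exact: SigmaV_compl.
- move=> A hA; have [eta Heta] := choice hA.
  eexists; exact: (SigmaV_union (xi := eta) Heta (fun k => ble_refl _)).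
Qed.

Lemma hier0 : hier set0. Proof. by case: hier_sigma. Qed.
Lemma hierC A : hier A -> hier (Iu `\` A). Proof. by case: hier_sigma => _ h _; apply: h. Qed.
Lemma hierU (A : nat -> set R) : (forall k, hier (A k)) -> hier (\bigcup_k A k).
Proof. by case: hier_sigma => _ _ h; apply: h. Qed.

Lemma hier_sub A : hier A -> A `<=` Iu.
Proof. by move=> [eta h]; exact: SigmaV_sub h. Qed.

Lemma hier_setU A B : hier A -> hier B -> hier (A `|` B).
Proof.
move=> hA hB.
have -> : A `|` B = \bigcup_k (if k is 0%N then A else B).
  apply/seteqP; split => x /=.
  - by case=> h; [exists 0%N| exists 1%N].
  - by case=> -[|k] _ h; [left|right].
by apply: hierU => -[|k].
Qed.

Lemma hier_setI A B : hier A -> hier B -> hier (A `&` B).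
Proof.
move=> hA hB.
have -> : A `&` B = Iu `\` ((Iu `\` A) `|` (Iu `\` B)).
  apply/seteqP; split => x /=.
  - move=> [xA xB]; split; first exact: hier_sub hA _ xA.
    by case=> -[].
  - move=> [xI h]; split.
    + by apply: contra_notP h => nA; left.
    + by apply: contra_notP h => nB; right.
apply: hierC; apply: hier_setU; exact: hierC.
Qed.

Lemma sigma1_open W : W `<=` Iu ->
  (forall x, W x -> exists p q : rat, ratr p < x < ratr q /\
     `]ratr p, ratr q[%classic `<=` W) -> SigmaV V bone W.
Proof.
move=> WI hW.
have -> : W = \bigcup_(C in [set C | Cfam V C /\ C `<=` W]) C.
  apply/seteqP; split => x.
  - move=> Wx; have [p [q [/andP[px xq] sub]]] := hW x Wx.
    exists `]ratr p, ratr q[%classic.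
      split => //; right; exists p, q; split => //; exact: subset_trans sub WI.
    by rewrite /= in_itv /= px xq.
  - by case=> C [_ CW] Cx; exact: CW.
apply: SigmaV_one; first by split; exact: ble_refl.
by move=> C [].
Qed.

Lemma hier_ray c : hier (Iu `&` [set x | c < x]).
Proof.
exists bone; apply: sigma1_open; first exact: subIsetl.
move=> x [+ cx]; rewrite /Iu /= in_itv /= => /andP[x0 x1].
have lox : Num.max 0 c < x by rewrite gt_max x0 cx.
have [p] := rat_in_itvoo lox; rewrite in_itv /= => /andP[lp px].
have [q] := rat_in_itvoo x1; rewrite in_itv /= => /andP[xq q1].
exists p, q; split; first by rewrite px xq.
move=> y /=; rewrite in_itv /= => /andP[py yq].
have := lt_trans lp py; rewrite gt_max => /andP[y0 cy].
split => //; rewrite /Iu /= in_itv /= y0 /=; exact: lt_trans yq q1.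
Qed.

Lemma hier_oc a b : hier (Iu `&` `]a, b]%classic).
Proof.
have -> : Iu `&` `]a, b]%classic =
   (Iu `&` [set x | a < x]) `&` (Iu `\` (Iu `&` [set x | b < x])).
  apply/seteqP; split => x /=.
  - rewrite in_itv /= => -[xI /andP[ax xb]]; split => //; split => //.
    by case=> _; rewrite ltNge xb.
  - move=> [[xI ax] [_ h]]; split => //; rewrite in_itv /= ax /=.
    by rewrite leNgt; apply/negP => bx; apply: h.
apply: hier_setI; first exact: hier_ray.
apply: hierC; exact: hier_ray.
Qed.

Lemma borel_hier B0 : @measurable _ (measurableTypeR R) B0 -> hier (Iu `&` B0).
Proof.
move=> mB.
have : <<s [set: R], (@ocitv R) >> `<=` [set B | hier (Iu `&` B)].
  apply: smallest_sub.
    split.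
    - by rewrite /= setI0; exact: hier0.
    - move=> B hB /=; have -> : Iu `&` ([set: R] `\` B) = Iu `\` (Iu `&` B).
        apply/seteqP; split => x /=.
        + by move=> [xI [_ nB]]; split => // -[].
        + by move=> [xI h]; split => //; split => // xB; apply: h.
      exact: hierC.
    - move=> F hF /=; rewrite setI_bigcupr; exact: hierU.
  move=> _ [[a b] _ <-] /=; exact: hier_oc.
by apply.
Qed.

Lemma BV_hier A : BV V A -> hier A.
Proof.
apply: smallest_sub; first exact: hier_sigma.
move=> _ [[B0 [mB ->]]| ->]; first exact: borel_hier.
exists bone; exact: SigmaV_V.
Qed.

End Sig.
Arguments SigmaV_sub {R V} hVI {xi A}.
Arguments SigmaV_bone {R V xi A}.
Arguments SigmaV_compl {R V eta A}.
Arguments SigmaV_union {R V} hVI {eta xi A}.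
Arguments SigmaV_set0 {R V}.
Arguments hier_sub {R V} hVI {A}.
Arguments BV_hier {R V} hVI {A}.

Local Close Scope ring_scope.

Local Open Scope ring_scope.

Section SA.
Variables (T : Type) (D : set T) (G : set (set T)).
Hypothesis sG : sigma_algebra D G.

Lemma sa0 : G set0. Proof. by case: sG. Qed.
Lemma saC X : G X -> G (D `\` X). Proof. by case: sG => _ h _; apply: h. Qed.
Lemma saU (A : nat -> set T) : (forall k, G (A k)) -> G (\bigcup_k A k).
Proof. by case: sG => _ _ h; apply: h. Qed.

Lemma saU2 X Y : G X -> G Y -> G (X `|` Y).
Proof.
move=> hX hY.
have -> : X `|` Y = \bigcup_k (if k is 0%N then X else Y).
  apply/seteqP; split => x /=.
  - by case=> h; [exists 0%N| exists 1%N].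
  - by case=> -[|k] _ h; [left|right].
by apply: saU => -[|k].
Qed.

Lemma saI2 X Y : (forall Z, G Z -> Z `<=` D) -> G X -> G Y -> G (X `&` Y).
Proof.
move=> sub hX hY.
have -> : X `&` Y = D `\` ((D `\` X) `|` (D `\` Y)).
  apply/seteqP; split => x /=.
  - move=> [xA xB]; split; first exact: sub _ hX _ xA.
    by case=> -[].
  - move=> [xI h]; split.
    + by apply: contra_notP h => nA; left.
    + by apply: contra_notP h => nB; right.
apply: saC; apply: saU2; exact: saC.
Qed.

Lemma saCU (I : countType) (F : I -> set T) : (forall i, G (F i)) ->
  G (\bigcup_i F i).
Proof.
move=> hF.
have -> : \bigcup_i F i =
   \bigcup_k (if @unpickle I k is Some i then F i else set0).
  apply/seteqP; split => x /=.
  - by case=> i _ h; exists (pickle i) => //; rewrite pickleK.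
  - by case=> k _; case: (unpickle k) => // i h; exists i.
apply: saU => k; case: (unpickle k) => //; exact: sa0.
Qed.

End SA.
Arguments sa0 {T D G}.
Arguments saC {T D G} sG {X}.
Arguments saU {T D G} sG {A}.
Arguments saU2 {T D G} sG {X Y}.
Arguments saI2 {T D G} sG {X Y}.
Arguments saCU {T D G} sG {I F}.

Section Prod.
Variable R : realType.
Variable V : set R.
Local Notation Iu := (@Iu R).
Hypothesis hVI : V `<=` Iu.
Variable beta : Type.
Local Notation D := (Iu `*` [set: beta]).
Local Notation BVp := (@BV_prod R V beta).

Lemma BVp_sigma : sigma_algebra D BVp.
Proof. exact: smallest_sigma_algebra. Qed.

Lemma BV_sigma : sigma_algebra Iu (BV V).
Proof. exact: smallest_sigma_algebra. Qed.

Lemma BV_Iu : BV V Iu.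
Proof. have := saC BV_sigma (sa0 BV_sigma); by rewrite setD0. Qed.

Lemma BV_sub A : BV V A -> A `<=` Iu.
Proof. by move=> /(BV_hier hVI) /(hier_sub hVI). Qed.

Lemma BVp_rect A B : BV V A -> BVp (A `*` B).
Proof. by move=> hA; rewrite /BV_prod; apply: sub_sigma_algebra; exists A => //; exists B. Qed.

Lemma BVp_sub X : BVp X -> X `<=` D.
Proof.
apply: (@smallest_sub _ _ _ [set X | X `<=` D]).

  split => //.
  - by move=> A _; exact: subDsetl.
  - by move=> F hF x [k _ h]; exact: hF k _ h.
move=> _ [A hA [B _ <-]] [x y] [/= xA _]; split => //; exact: BV_sub hA _ xA.
Qed.

Definition Gc := [set Q : set (R * beta) | exists xi, forall alpha, comp_le V Q alpha xi].

Lemma Gc_sigma : sigma_algebra D Gc.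
Proof.
split.
- exists bone => a; exists bone; split; first exact: ble_refl.
  have -> : section set0 a = set0 :> set R by apply/seteqP; split.
  exact: SigmaV_set0.
- move=> Q [xi hxi]; exists (bsucc xi) => a.
  have [eta [le h]] := hxi a.
  exists (bsucc eta); split; first exact/ble_succ/blt_succ.
  have -> : section (D `\` Q) a = Iu `\` section Q a.
    apply/seteqP; split => x /=; rewrite /section /=.
    + by move=> [[xI _] nQ].
    + by move=> [xI nQ].
  exact: SigmaV_compl.
- move=> F hF; have [xi hxi] := choice hF.
  exists (bsucc (blim (fun k => bsucc (xi k)))) => a.
  have [eta heta] := choice (fun k => hxi k a).
  exists (bsucc (blim (fun k => bsucc (xi k)))); split; first exact: ble_refl.
  have -> : section (\bigcup_k F k) a = \bigcup_k section (F k) a.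
    by apply/seteqP; split => x /=; rewrite /section /=.
  apply: (SigmaV_union hVI (eta := eta)) => k; [exact: (heta k).2|exact: (heta k).1].
Qed.

Lemma BVp_Gc Q : BVp Q -> Gc Q.
Proof.
apply: smallest_sub; first exact: Gc_sigma.
move=> _ [A hA [B _ <-]].
have [eta h] := BV_hier hVI hA.
exists eta => a; case: (pselect (B a)) => Ba.
- exists eta; split; first exact: ble_refl.
  have -> : section (A `*` B) a = A by apply/seteqP; split => x /=; rewrite /section /=; [case|].
  exact: h.
- exists bone; split; first exact: SigmaV_bone h.
  have -> : section (A `*` B) a = set0 by apply/seteqP; split => x /=; rewrite /section /=; case.
  exact: SigmaV_set0.
Qed.

End Prod.

Local Close Scope ring_scope.

Local Open Scope ring_scope.

Lemma SigmaV_inv (R : realType) (V : set R) eta A : SigmaV V eta A ->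
  (exists F, F `<=` Cfam V /\ A = \bigcup_(C in F) C) \/
  (exists (xs : nat -> bord) (S : nat -> set R), blt bone eta /\ (forall n, blt (xs n) eta) /\
     (forall n, SigmaV V (xs n) (S n)) /\ A = \bigcup_n (@Iu R `\` S n)).
Proof.
case=> [xi F _ HF|xi xs S h1 h2 h3]; first by left; exists F.
by right; exists xs, S.
Qed.

Section Back.
Variable R : realType.
Variable V : set R.
Local Notation Iu := (@Iu R).
Hypothesis hVI : V `<=` Iu.
Variable beta : Type.
Local Notation D := (Iu `*` [set: beta]).
Local Notation BVp := (@BV_prod R V beta).

Definition Pgood (xi : bord) := forall Q : set (R * beta), Q `<=` D ->
  (forall a, section Q a = set0 \/
     exists eta, ble eta xi /\ SigmaV V eta (section Q a)) -> BVp Q.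

Lemma Pgood0 : Pgood bzero.
Proof.
move=> Q QD hs.
have -> : Q = set0.
  apply/seteqP; split => -[r a] // Qra.
  case: (hs a) => [e|[eta [le h]]].
    by have : section Q a r by []; rewrite e.
  have := ble_trans (SigmaV_bone h) le => H.
  inversion H as [| ?a ?b Hl|]; inversion Hl.
exact: (sa0 (@BVp_sigma R V beta)).
Qed.


Lemma BV_V : BV V V.
Proof. rewrite /BV; apply: sub_sigma_algebra; by right. Qed.

Lemma step xi (g : nat -> bord) : (forall m, Pgood (g m)) ->
  (forall x, blt x xi -> exists m, ble x (g m)) -> Pgood xi.
Proof.
move=> IH Hg Q QD hs.
pose L1 a := exists F, F `<=` Cfam V /\ section Q a = \bigcup_(C in F) C.
have sG := @BVp_sigma R V beta.
have -> : Q = (Q `&` [set z | L1 z.2]) `|` (Q `&` [set z | ~ L1 z.2]).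
  apply/seteqP; split => z.
  - by move=> Qz; case: (pselect (L1 z.2)) => h; [left|right].
  - by case=> -[].
apply: (saU2 sG).
- pose B (C : set R) := [set a | L1 a /\ C `<=` section Q a].
  have -> : Q `&` [set z | L1 z.2] =
     ((V `*` B V) `|` ((Iu `\` V) `*` B (Iu `\` V))) `|`
     \bigcup_(pq in [set: rat * rat])
        ((Iu `&` `]ratr pq.1, ratr pq.2[%classic) `*` B `]ratr pq.1, ratr pq.2[%classic).
    apply/seteqP; split => -[r a] /=.
    + move=> [Qra [F [FC e]]].
      have : (\bigcup_(C in F) C) r by rewrite -e.
      case=> C FC' Cr.
      have CQ : C `<=` section Q a by move=> y Cy; rewrite e; exists C.
      case: (FC _ FC') => [[CV|CV]|[p [q [Ce CI]]]].
      * left; left; move: CQ Cr; rewrite CV => CQ Cr; split => //; split => //; by exists F.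
      * left; right; move: CQ Cr; rewrite CV => CQ Cr; split => //; split => //; by exists F.
      * have rI := CI r Cr.
        right; exists (p, q) => //=; move: CQ Cr; rewrite Ce => CQ Cr.
        split; [by split|split => //; by exists F].
    + case=> [[[rV [La VQ]]|[rIV [La VQ]]]|[[p q] _ [[rI rpq] [La pqQ]]]]; split => //;
        [exact: VQ|exact: VQ|exact: pqQ].
  apply: (saU2 sG); first apply: (saU2 sG).
  + apply: (@BVp_rect R V beta); exact: BV_V.
  + apply: (@BVp_rect R V beta); exact: (saC (@BV_sigma R V) BV_V).
  + apply: (saCU sG) => pq; apply: (@BVp_rect R V beta).
    rewrite /BV; apply: sub_sigma_algebra; left.
    exists `]ratr pq.1, ratr pq.2[%classic; split => //; exact: measurable_itv.
- have hchoice : forall a, exists p : (nat -> bord) * (nat -> set R),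
     ~ L1 a -> (forall n, blt (p.1 n) xi) /\ (forall n, SigmaV V (p.1 n) (p.2 n)) /\
       section Q a = \bigcup_n (Iu `\` p.2 n).
    move=> a; case: (pselect (L1 a)) => La.
      by exists ((fun _ => bzero), (fun _ => set0)).
    case: (hs a) => [e|[eta [le h]]].
      by exfalso; apply: La; exists set0; split => //; rewrite e bigcup_set0.
    case: (SigmaV_inv _ _ _ _ h) => [[F [FC e]]|[xs [S [_ [hxs [hS e]]]]]].
      by exfalso; apply: La; exists F.
    exists (xs, S) => _ /=; split; last by split.
    move=> n; exact: blt_ble_trans (hxs n) le.
  have [PS HPS] := choice hchoice.
  have hM : forall an : beta * nat, exists m,
      ~ L1 an.1 -> ble ((PS an.1).1 an.2) (g m).
    move=> [a n]; case: (pselect (L1 a)) => La; first by exists 0%N.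
    have [m hm] := Hg _ ((HPS a La).1 n); by exists m.
  have [M HM] := choice hM.
  pose Qnm n m := [set z : R * beta | ~ L1 z.2 /\ M (z.2, n) = m /\ (PS z.2).2 n z.1].
  have hQnm : forall n m, BVp (Qnm n m).
    move=> n m; apply: (IH m).
    - move=> [r a] [La [_ Sr]] /=; split => //.
      exact: (SigmaV_sub hVI ((HPS a La).2.1 n)).
    - move=> a; case: (pselect (~ L1 a /\ M (a, n) = m)) => [[La Ma]|nh].
      + right; exists ((PS a).1 n); split; first by rewrite -Ma; exact: HM (a, n) La.
        have -> : section (Qnm n m) a = (PS a).2 n.
          apply/seteqP; split => x; rewrite /section /=; [by case=> _ []|by move=> h; split].
        exact: (HPS a La).2.1 n.
      + left; apply/seteqP; split => x //; rewrite /section /= => -[La [Ma _]]; by apply: nh.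
  have -> : Q `&` [set z | ~ L1 z.2] =
      \bigcup_n ((Iu `*` [set a | ~ L1 a]) `&` (D `\` \bigcup_m Qnm n m)).
    apply/seteqP; split => -[r a] /=.
    + move=> [Qra La].
      have : section Q a r by [].
      rewrite (HPS a La).2.2 => -[n _ [rI nS]].
      exists n => //; split; first by split.
      split; first by split.
      by case=> m _ [_ [_ h]]; apply: nS.
    + move=> [n _ [[rI La] [_ nU]]]; split => //.
      have : section Q a r; last by [].
      rewrite (HPS a La).2.2; exists n => //; split => // h; apply: nU.
      by exists (M (a, n)).
  apply: (saU sG) => n; apply: (saI2 sG (@BVp_sub R V hVI beta)).
  + apply: (@BVp_rect R V beta); exact: BV_Iu.
  + apply: (saC sG); apply: (saU sG) => m; exact: hQnm.
Qed.

Lemma Pgood_all xi : Pgood xi.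
Proof.
elim: xi => [|z IH|f IH]; first exact: Pgood0.
- apply: (step _ (fun _ => z)) => // x H; exists 0%N; by invlt H.
- apply: (step _ f) => // x H; invlt H; exists n; exact: blt_ble.
Qed.

End Back.

Local Close Scope ring_scope.


Theorem lemma5p1 (R : realType) (V : set R)
    (hVI : V `<=` (@Iu R)) (hV : ~ lebesgue_measurable V)
    (beta : Type) (Q : set (R * beta)) (hQ : Q `<=` (@Iu R) `*` [set: beta]) :
  BV_prod V Q <->
  (sections_in_hierarchy V Q /\ comp_lt_omega1 V Q).
Proof.
split.
- move=> /(@BVp_Gc R V hVI beta Q) [xi hxi]; split; last by exists xi.
  by move=> a; have [eta [_ h]] := hxi a; exists eta.
- move=> [_ [xi hxi]]; apply: (@Pgood_all R V hVI beta xi) => // a; right; exact: hxi a.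
Qed.
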